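(* Let $a:\mathbb{R}\to\mathbb{R}$ be smooth with $a'(u)\neq 0$, let $h$ satisfy $h''=a$, and let $\alpha,\beta\in\mathbb{R}$. Define $$c=\frac{\alpha}{a'},\qquad p=\frac{\beta}{2a'}-\frac{3\alpha^2}{10}\frac{a''}{(a')^3},$$ $$s=\alpha^2\left(\frac{2}{5}\frac{(a'')^3}{(a')^5}-\frac{7}{20}\frac{a''a'''}{(a')^4}+\frac{1}{24}\frac{a''''}{(a')^3}\right)-\frac{\beta}{12}\left(\frac{(a'')^2}{(a')^3}-\frac{a'''}{(a')^2}\right),$$ all evaluated at $u$. Let $$\tilde h=h-\frac{\varepsilon^2}{2}c\,h'''u_x^2+\varepsilon^4\Big[\Big(p\,h'''+\tfrac{3}{10}c^2h^{(4)}\Big)u_{xx}^2-\Big(\tfrac{c\,c''}{8}h^{(4)}+\tfrac{c\,c'}{8}h^{(5)}+\tfrac{c^2}{24}h^{(6)}+\tfrac{p'}{6}h^{(4)}+\tfrac{p}{6}h^{(5)}-s\,h'''\Big)u_x^4\Big]$$ and $\tilde H=\int\tilde h(u,u_x,u_{xx};\varepsilon)\,dx$. Then the Hamiltonian equation $$u_t=\partial_x\frac{\delta\tilde H}{\delta u(x)}$$ coincides with $$u_t=a(u)\,u_x+\varepsilon^2\alpha\,u_{xxx}+\varepsilon^4\beta\,u_{xxxxx}.$$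
   Context: Primes on $a,c,p,h$ denote derivatives with respect to $u$. For a local functional $H=\int h(u,u_x,u_{xx},\dots)\,dx$, the variational derivative is $\frac{\delta H}{\delta u(x)}=\sum_{k\geq 0}(-1)^k\frac{d^k}{dx^k}\frac{\partial h}{\partial u^{(k)}_x}$, where $u^{(k)}_x$ is the $k$-th $x$-derivative of $u$ and $\frac{d}{dx}$ is the total $x$-derivative. The identity is meant as an identity of differential polynomials (rational in $u$-dependence) in each power of $\varepsilon$. *)

(* Defs.v *)
From Stdlib Require Import Reals ClassicalEpsilon.
Open Scope R_scope.

(* Derivative operator: the derivative of f at x if it exists (it is unique),
   chosen by classical epsilon; an arbitrary value otherwise. *)
Definition Deriv (f : R -> R) (x : R) : R :=
  epsilon (inhabits 0) (fun l => derivable_pt_lim f x l).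

Definition Dn (n : nat) (f : R -> R) : R -> R := Nat.iter n Deriv f.

Definition Differentiable (f : R -> R) : Prop :=
  forall x, exists l, derivable_pt_lim f x l.

Definition Smooth (f : R -> R) : Prop :=
  forall n : nat, Differentiable (Dn n f).

Definition cfun (a : R -> R) (alpha : R) (u : R) : R :=
  alpha / Dn 1 a u.

Definition pfun (a : R -> R) (alpha beta : R) (u : R) : R :=
  beta / (2 * Dn 1 a u)
  - 3 * alpha ^ 2 / 10 * (Dn 2 a u / (Dn 1 a u) ^ 3).

Definition sfun (a : R -> R) (alpha beta : R) (u : R) : R :=
  alpha ^ 2 * (2 / 5 * ((Dn 2 a u) ^ 3 / (Dn 1 a u) ^ 5)
               - 7 / 20 * (Dn 2 a u * Dn 3 a u / (Dn 1 a u) ^ 4)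
               + 1 / 24 * (Dn 4 a u / (Dn 1 a u) ^ 3))
  - beta / 12 * ((Dn 2 a u) ^ 2 / (Dn 1 a u) ^ 3 - Dn 3 a u / (Dn 1 a u) ^ 2).

(* The density h~(u, u_x, u_xx; eps); v stands for u_x, w for u_xx. *)
Definition htilde (a h : R -> R) (alpha beta : R) (u v w eps : R) : R :=
  let c := cfun a alpha in
  let p := pfun a alpha beta in
  let s := sfun a alpha beta in
  h u
  - eps ^ 2 / 2 * c u * Dn 3 h u * v ^ 2
  + eps ^ 4 * ( (p u * Dn 3 h u + 3 / 10 * (c u) ^ 2 * Dn 4 h u) * w ^ 2
              - ( c u * Dn 2 c u / 8 * Dn 4 h u
                + c u * Dn 1 c u / 8 * Dn 5 h u
                + (c u) ^ 2 / 24 * Dn 6 h u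
                + Dn 1 p u / 6 * Dn 4 h u
                + p u / 6 * Dn 5 h u
                - s u * Dn 3 h u) * v ^ 4 ).

(* Variational derivative of H~ = \int h~ dx evaluated along the function U, at x:
   d h~/du - d/dx (d h~/du_x) + d^2/dx^2 (d h~/du_xx). *)
Definition varder (a h : R -> R) (alpha beta eps : R) (U : R -> R) (x : R) : R :=
  let ht := htilde a h alpha beta in
  Deriv (fun u0 => ht u0 (Dn 1 U x) (Dn 2 U x) eps) (U x)
  - Deriv (fun y => Deriv (fun v0 => ht (U y) v0 (Dn 2 U y) eps) (Dn 1 U y)) x
  + Dn 2 (fun y => Deriv (fun w0 => ht (U y) (Dn 1 U y) w0 eps) (Dn 2 U y)) x.

(* Main.v *)
Require Import Defs.
From Stdlib Require Import Reals Lra ClassicalEpsilon FunctionalExtensionality.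
From Coquelicot Require Import Coquelicot.
Open Scope R_scope.

Lemma Deriv_unique f x l : derivable_pt_lim f x l -> Deriv f x = l.
Proof.
  intro H. unfold Deriv.
  apply (uniqueness_limite f x); [|exact H].
  apply (epsilon_spec (inhabits 0) (fun l => derivable_pt_lim f x l)).
  exists l; exact H.
Qed.

Lemma Deriv_is f x l : is_derive f x l -> Deriv f x = l.
Proof. intro H; apply Deriv_unique, is_derive_Reals, H. Qed.

Lemma diff_ex f : Differentiable f -> forall x, ex_derive f x.
Proof. intros H x. destruct (H x) as [l Hl]. exists l. apply is_derive_Reals, Hl. Qed.

Lemma Deriv_Derive f x : ex_derive f x -> Deriv f x = Derive f x.
Proof. intro H. apply Deriv_is. apply Derive_correct, H. Qed.

Lemma smooth_ex f k x : Smooth f -> ex_derive (Dn k f) x.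
Proof. intro H. apply diff_ex, H. Qed.

Lemma smooth_Derive f k x : Smooth f -> Derive (Dn k f) x = Dn (S k) f x.
Proof. intro H. change (Dn (S k) f x) with (Deriv (Dn k f) x).
  symmetry; apply Deriv_Derive, smooth_ex, H. Qed.

Lemma smooth_Derive0 f x : Smooth f -> Derive f x = Dn 1 f x.
Proof. intro H. apply (smooth_Derive f 0 x H). Qed.

Lemma smooth_ex0 f x : Smooth f -> ex_derive f x.
Proof. intro H. apply (smooth_ex f 0 x H). Qed.


Lemma smooth_is f k y : Smooth f -> is_derive (Dn k f) y (Dn (S k) f y).
Proof. intro H. rewrite <- (smooth_Derive f k y H). apply Derive_correct, smooth_ex, H. Qed.

Ltac fin H := repeat match goal with
  | |- context [Derive ?F ?y] => rewrite (is_derive_unique F y _ (H y)) end.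

Ltac side := repeat split; repeat match goal with
  | H : forall y, is_derive ?F y (?G y) |- ex_derive _ ?u => exists (G u); apply H
  | |- _ <> 0 => repeat apply Rmult_integral_contrapositive_currified; try assumption; try lra
  end.

Lemma gen_c1 (F1 F2 : R -> R) al u : (forall y, is_derive F1 y (F2 y)) -> F1 u <> 0 ->
  is_derive (fun u => al / F1 u) u (- al * F2 u / (F1 u)^2).
Proof. intros H1 Hn. auto_derive.
  - side.
  - replace (Derive (fun x => F1 x) u) with (F2 u) by (symmetry; apply is_derive_unique; apply H1). field. exact Hn. Qed.

Lemma gen_c2 (F1 F2 F3 : R -> R) al u : (forall y, is_derive F1 y (F2 y)) ->
  (forall y, is_derive F2 y (F3 y)) -> F1 u <> 0 ->
  is_derive (fun u => - al * F2 u / (F1 u)^2) u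
    (- al * F3 u / (F1 u)^2 + 2 * al * (F2 u)^2 / (F1 u)^3).
Proof. intros H1 H2 Hn. auto_derive.
  - side.
  - replace (Derive (fun x => F1 x) u) with (F2 u) by (symmetry; apply is_derive_unique; apply H1).
    replace (Derive (fun x => F2 x) u) with (F3 u) by (symmetry; apply is_derive_unique; apply H2).
    field. exact Hn. Qed.

Lemma gen_p1 (F1 F2 F3 : R -> R) al be u : (forall y, is_derive F1 y (F2 y)) ->
  (forall y, is_derive F2 y (F3 y)) -> F1 u <> 0 ->
  is_derive (fun u => be / (2 * F1 u) - 3 * al ^ 2 / 10 * (F2 u / (F1 u) ^ 3)) u
     (- be * F2 u / (2 * (F1 u)^2)
     - 3 * al^2 / 10 * (F3 u / (F1 u)^3 - 3 * (F2 u)^2 / (F1 u)^4)).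
Proof. intros H1 H2 Hn. auto_derive.
  - side.
  - replace (Derive (fun x => F1 x) u) with (F2 u) by (symmetry; apply is_derive_unique; apply H1).
    replace (Derive (fun x => F2 x) u) with (F3 u) by (symmetry; apply is_derive_unique; apply H2).
    field. exact Hn. Qed.


Lemma Deriv_ext f g x : (forall y, f y = g y) -> Deriv f x = Deriv g x.
Proof. intro H. now rewrite (functional_extensionality _ _ H). Qed.

Ltac side2 := repeat split; try exact I; try (apply diff_ex; assumption).
Ltac eqD := repeat match goal with |- context [Derive (fun x => ?F x) ?t] =>
   replace (Derive (fun x => F x) t) with (Deriv F t) by (apply Deriv_Derive; apply diff_ex; assumption) end; ring.

Lemma T1 (f : R -> R) C1 C2 u : Differentiable f -> Deriv (fun u0 => f u0 - C1 + C2) u = Deriv f u.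
Proof. intro H. apply Deriv_is. auto_derive; [side2 | eqD]. Qed.

Lemma T2a (V : R -> R) k  y : Differentiable V -> Deriv (fun y0 => k * V y0) y = k * Deriv V y.
Proof. intro H. apply Deriv_is. auto_derive; [side2 | eqD]. Qed.

Lemma T2b (H0 K v : R) k : Deriv (fun v0 => H0 - k/2*v0^2 + K) v = -k * v.
Proof. apply Deriv_is. auto_derive; [side2 | field]. Qed.

Lemma T3b (H0 K w : R) k : Deriv (fun w0 => H0 - K + k/2*w0^2) w = k * w.
Proof. apply Deriv_is. auto_derive; [side2 | field]. Qed.

Lemma TF (G U0 U2 U4 : R->R) k2 k4 x : Differentiable G -> Differentiable U0 -> Differentiable U2 -> Differentiable U4 ->
 Deriv (fun y => G (U0 y) + k2 * U2 y + k4 * U4 y) x = Deriv G (U0 x) * Deriv U0 x + k2 * Deriv U2 x + k4 * Deriv U4 x.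
Proof. intros. apply Deriv_is. auto_derive; [side2 | eqD]. Qed.

Lemma T2 (H0 V Z : R -> R) (k K : R) y : Differentiable V ->
 Deriv (fun y0 => Deriv (fun v0 => H0 y0 - k/2*v0^2 + K*(Z y0)^2) (V y0)) y = -k * Deriv V y.
Proof. intro HV. rewrite (Deriv_ext _ (fun y0 => -k * V y0)).
  - apply T2a, HV.
  - intro t. apply T2b. Qed.

Lemma T3 (H0 Z V : R->R) k K y : Differentiable V -> Differentiable (Dn 1 V) ->
 Dn 2 (fun y0 => Deriv (fun w0 => H0 y0 - K*(Z y0)^2 + k/2*w0^2) (V y0)) y = k * Dn 2 V y.
Proof. intros HV HV1.
  change (Deriv (Deriv (fun y0 => Deriv (fun w0 => H0 y0 - K*(Z y0)^2 + k/2*w0^2) (V y0))) y = k * Deriv (Dn 1 V) y).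
  assert (E : Deriv (fun y0 => Deriv (fun w0 => H0 y0 - K*(Z y0)^2 + k/2*w0^2) (V y0)) = fun t => k * Dn 1 V t).
  { apply functional_extensionality; intro t.
    rewrite (Deriv_ext _ (fun y0 => k * V y0)).
    - apply T2a, HV.
    - intro s. apply T3b. }
  rewrite E. apply T2a, HV1. Qed.

Theorem mainTheorem7 (a h : R -> R) (alpha beta : R)
  (Ha : Smooth a)
  (Ha1 : forall u, Dn 1 a u <> 0)
  (Hh0 : Differentiable h)
  (Hh1 : Differentiable (Dn 1 h))
  (Hh2 : forall u, Dn 2 h u = a u) :
  forall (U : R -> R), Smooth U ->
  forall eps x : R,
    Deriv (varder a h alpha beta eps U) x
    = a (U x) * Dn 1 U x + eps ^ 2 * alpha * Dn 3 U x + eps ^ 4 * beta * Dn 5 U x.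
Proof.
  intros U HU eps x.
  assert (DnH : forall n, Dn (n + 2) h = Dn n a).
  { induction n.
    - apply functional_extensionality; exact Hh2.
    - change (Deriv (Dn (n + 2) h) = Deriv (Dn n a)). now rewrite IHn. }
  assert (D1 : forall y, is_derive (Dn 1 a) y (Dn 2 a y)) by (intro; apply smooth_is, Ha).
  assert (D2 : forall y, is_derive (Dn 2 a) y (Dn 3 a y)) by (intro; apply smooth_is, Ha).
  assert (Dc1 : forall u, Dn 1 (cfun a alpha) u = - alpha * Dn 2 a u / (Dn 1 a u)^2).
  { intro u. change (Dn 1 (cfun a alpha) u) with (Deriv (cfun a alpha) u). apply Deriv_is. unfold cfun.
    apply (gen_c1 (Dn 1 a) (Dn 2 a)); auto. }
  assert (Dc2 : forall u, Dn 2 (cfun a alpha) u =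
     - alpha * Dn 3 a u / (Dn 1 a u)^2 + 2 * alpha * (Dn 2 a u)^2 / (Dn 1 a u)^3).
  { intro u. change (Dn 2 (cfun a alpha) u) with (Deriv (Dn 1 (cfun a alpha)) u).
    rewrite (functional_extensionality _ _ Dc1). apply Deriv_is.
    apply (gen_c2 (Dn 1 a) (Dn 2 a) (Dn 3 a)); auto. }
  assert (Dp1 : forall u, Dn 1 (pfun a alpha beta) u =
     - beta * Dn 2 a u / (2 * (Dn 1 a u)^2)
     - 3 * alpha^2 / 10 * (Dn 3 a u / (Dn 1 a u)^3 - 3 * (Dn 2 a u)^2 / (Dn 1 a u)^4)).
  { intro u. change (Dn 1 (pfun a alpha beta) u) with (Deriv (pfun a alpha beta) u).
    apply Deriv_is. unfold pfun.
    apply (gen_p1 (Dn 1 a) (Dn 2 a) (Dn 3 a)); auto. }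
  assert (HT : forall u v w e, htilde a h alpha beta u v w e =
             h u - e^2 * alpha / 2 * v^2 + e^4 * beta / 2 * w^2).
  { intros u v w e. unfold htilde.
    rewrite (DnH 1%nat : Dn 3 h = Dn 1 a), (DnH 2%nat : Dn 4 h = Dn 2 a),
            (DnH 3%nat : Dn 5 h = Dn 3 a), (DnH 4%nat : Dn 6 h = Dn 4 a).
    rewrite Dc1, Dc2, Dp1. unfold cfun, pfun, sfun. field. apply Ha1. }
  assert (HTf : htilde a h alpha beta = fun u v w e => h u - e^2*alpha/2*v^2 + e^4*beta/2*w^2).
  { apply functional_extensionality; intro u. apply functional_extensionality; intro v.
    apply functional_extensionality; intro w. apply functional_extensionality; intro e. apply HT. }
  assert (VD : forall y, varder a h alpha beta eps U y =
     Dn 1 h (U y) + eps^2*alpha*Dn 2 U y + eps^4*beta*Dn 4 U y).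
  { intro y. unfold varder. cbv zeta. rewrite HTf. cbv beta.
    rewrite T1 by exact Hh0.
    rewrite (T2 (fun y0 => h (U y0)) (Dn 1 U) (Dn 2 U)) by apply HU.
    rewrite (T3 (fun y0 => h (U y0)) (Dn 1 U) (Dn 2 U)) by first [apply (HU 2%nat) | apply (HU 3%nat)].
    change (Deriv h (U y) - - (eps ^ 2 * alpha) * Dn 2 U y + eps ^ 4 * beta * Dn 2 (Dn 2 U) y =
      Deriv h (U y) + eps ^ 2 * alpha * Dn 2 U y + eps ^ 4 * beta * Dn 2 (Dn 2 U) y). ring. }
  rewrite (Deriv_ext _ _ x VD).
  rewrite TF; try apply Hh1; try apply (HU 0%nat); try apply HU.
  change (Dn 2 h (U x) * Dn 1 U x + eps ^ 2 * alpha * Dn 3 U x + eps ^ 4 * beta * Dn 5 U x =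
    a (U x) * Dn 1 U x + eps ^ 2 * alpha * Dn 3 U x + eps ^ 4 * beta * Dn 5 U x).
  rewrite Hh2. reflexivity.
Qed.
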